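(* Let $s_1,\dots,s_k$ be positive integers. For a continuous function $f$ on $[0,1]$ define $D_{s_1,\dots,s_k}f$ as the iterated integral $$D_{s_1,\dots,s_k}f=\int_0^1 x_0^{s_1-1}x_1\,\chi_{s_2}\cdots\chi_{s_k}\,\overline{f(t)\,dt},$$ where $x_0=\frac{dt}{t}$, $x_1=\frac{dt}{1-t}$, and $\chi_1=\overline{x_1}$, $\chi_2=\overline{x_0}\,x_1$, $\chi_s=\overline{x_0}\,x_0^{s-2}x_1$ for $s\ge3$. Then for every positive integer $n$, $$D_{s_1,\dots,s_k}\big(n x^{n-1}\big)=\sum_{n\ge n_k\ge n_{k-1}\ge\cdots\ge n_1\ge1}\frac{1}{n_1^{s_1}n_2^{s_2}\cdots n_k^{s_k}}.$$
   Context: Iterated integral with bars: for differential forms $\omega_j=g_j(t)\,dt$ on $[0,1]$, $\int_0^1\omega_1\omega_2\cdots\omega_m$ (with some of $\omega_2,\dots,\omega_m$ carrying a bar) denotes $\int_0^1 g_1(u_1)\,du_1\int_{I_2}g_2(u_2)\,du_2\cdots\int_{I_m}g_m(u_m)\,du_m$, where $I_j=(0,u_{j-1})$ if $\omega_j$ carries no bar and $I_j=(u_{j-1},1)$ if $\omega_j$ carries a bar. The first form never carries a bar. Thus the last factor $\overline{f(t)dt}$ means the innermost integral is $\int_{u}^1 f(t)\,dt$ where $u$ is the previous variable. *)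

(* Defs.v *)
From HB Require Import structures.
From mathcomp Require Import all_boot all_order all_algebra.
From mathcomp Require Import all_classical all_reals all_analysis.
Set Implicit Arguments. Unset Strict Implicit. Unset Printing Implicit Defensive.
Import Order.TTheory GRing.Theory Num.Theory.
Local Open Scope classical_set_scope.
Local Open Scope ring_scope.

(* A differential form g(t) dt together with a flag: true = carries a bar. *)
Definition form (R : realType) := ((R -> R) * bool)%type.

(* Inner iterated integral: given the previous variable u, the list of the
   remaining forms ws = w_j ... w_m is integrated as
   int_{I_j} g_j(v) (inner integral of the rest at v) dv,
   with I_j = (0,u) (no bar) or (u,1) (bar).  Lebesgue integral over the
   open interval, extended-real valued (all integrands in the statement are
   nonnegative, so this is the improper integral, possibly +oo). *)
Fixpoint iint_from (R : realType) (ws : seq (form R)) (u : R) : \bar R :=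
  match ws with
  | [::] => 1%E
  | (g, b) :: ws' =>
      \int[lebesgue_measure]_(v in (if b then `]u, 1%R[ else `]0%R, u[)%classic)
          ((g v)%:E * iint_from ws' v)%E
  end.

(* Full iterated integral int_0^1 w_1 ... w_m ; the first form carries no bar,
   so its domain (0,u) with u = 1 is (0,1). *)
Definition iint (R : realType) (ws : seq (form R)) : \bar R := iint_from ws 1.

Definition x0 (R : realType) (b : bool) : form R := (fun t : R => t^-1, b).
Definition x1 (R : realType) (b : bool) : form R := (fun t : R => (1 - t)^-1, b).

Definition chi (R : realType) (s : nat) : seq (form R) :=
  if s == 1%N then [:: x1 R true]
  else x0 R true :: nseq (s - 2) (x0 R false) ++ [:: x1 R false].

Definition Dword (R : realType) (s : seq nat) (f : R -> R) : seq (form R) :=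
  match s with
  | [::] => [:: (f, true)]
  | s1 :: rest =>
      nseq s1.-1 (x0 R false) ++ [:: x1 R false] ++ flatten (map (@chi R) rest)
        ++ [:: (f, true)]
  end.

Definition D (R : realType) (s : seq nat) (f : R -> R) : \bar R := iint (Dword s f).

(* sum over n >= n_k >= ... >= n_1 >= 1 of 1/(n_1^s_1 ... n_k^s_k);
   n_i is represented as (v i).+1 with v i : 'I_n. *)
Definition mzv_trunc (R : realType) (s : seq nat) (n : nat) : R :=
  \sum_(v : {ffun 'I_(size s) -> 'I_n} |
          [forall i : 'I_(size s), forall j : 'I_(size s), (i <= j)%N ==> (v i <= v j)%N])
    \prod_(i < size s) (((v i).+1%:R : R) ^+ nth 0%N s i)^-1.

(* Main.v *)
Require Import Defs.
From HB Require Import structures.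
From mathcomp Require Import all_boot all_order all_algebra.
From mathcomp Require Import all_classical all_reals all_analysis.
From mathcomp Require Import ring lra zify.
Set Implicit Arguments. Unset Strict Implicit. Unset Printing Implicit Defensive.
Import Order.TTheory GRing.Theory Num.Theory.
Import numFieldNormedType.Exports.
Local Open Scope classical_set_scope.
Local Open Scope ring_scope.

Section S.
Variable R : realType.
Variable n : nat.

Lemma int_poly (p : {poly R}) (x y : R) : x < y ->
  (\int[lebesgue_measure]_(v in `]x, y[) ((p^`()).[v])%:E = (p.[y] - p.[x])%:E)%E.
Proof.
move=> xy.
rewrite -(@integral_itv_bndoo _ x y _ true false); last first.
  apply/measurable_realfun.measurable_EFinP.
  exact: measurable_poly.
rewrite (@continuous_FTC2 _ _ (horner p)) //.
- apply/continuous_subspaceT => z; exact/continuous_horner.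
- split=> [z _| |].
  + exact: derivable_horner.
  + by apply: cvg_at_right_filter; exact: continuous_horner.
  + by apply: cvg_at_left_filter; exact: continuous_horner.
- by move=> z _; rewrite -derivE.
Qed.

Definition Pp (c : nat -> R) : {poly R} := \sum_(l < n.+1) c l *: 'X^l.
Definition Q (a : nat -> R) (v : R) := \sum_(m < n.+1) a m * (1 - v ^+ m).
Definition T (a : nat -> R) (l : nat) := \sum_(m < n.+1 | (l <= m)%N) a m.
Definition dv (b : nat -> R) (l : nat) := b l / l%:R.

Lemma hornerPp c v : (Pp c).[v] = \sum_(l < n.+1) c l * v ^+ l.
Proof. by rewrite /Pp horner_sum; apply: eq_bigr => l _; rewrite hornerZ hornerXn. Qed.

Lemma derivPp c v : ((Pp c)^`()).[v] = \sum_(l < n.+1) c l * (v ^+ l.-1 *+ l).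
Proof.
rewrite /Pp linear_sum horner_sum; apply: eq_bigr => l _.
by rewrite linearZ /= derivXn hornerZ hornerMn hornerXn.
Qed.

Lemma dv0 b : dv b 0 = 0.
Proof. by rewrite /dv invr0 mulr0. Qed.

Lemma dvK b l : (dv b l) * (1 *+ l) = if l == 0%N then 0 else b l.
Proof.
case: l => [|l]; first by rewrite mulr0n mulr0.
by rewrite /dv -mulrA mulVf ?mulr1 // pnatr_eq0.
Qed.

Lemma Pp0 c : (Pp c).[0] = c 0%N.
Proof.
rewrite hornerPp big_ord_recl /= expr0 mulr1 big1 ?addr0 // => i _.
by rewrite expr0n /= mulr0.
Qed.

Lemma Pp1Q c u : (Pp c).[1] - (Pp c).[u] = Q c u.
Proof.
rewrite !hornerPp /Q -sumrB; apply: eq_bigr => l _.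
by rewrite expr1n mulr1 mulrBr mulr1.
Qed.

Lemma idI b v : v != 0 -> b 0%N = 0 ->
  v^-1 * (\sum_(l < n.+1) b l * v ^+ l) = \sum_(l < n.+1) dv b l * (v ^+ l.-1 *+ l).
Proof.
move=> v0 b0; rewrite mulr_sumr; apply: eq_bigr => l _.
rewrite -mulr_natr [RHS]mulrCA dvK; case: l => [[|l] Hl] /=.
  by rewrite b0 mul0r !mulr0.
by rewrite exprS; field.
Qed.

Lemma geom (v : R) m : (1 - v) * \sum_(j < m) v ^+ j = 1 - v ^+ m.
Proof.
elim: m => [|m IH]; first by rewrite big_ord0 mulr0 expr0 subrr.
by rewrite big_ord_recr /= mulrDr IH exprS; ring.
Qed.

Lemma idII a v : v != 1 ->
  (1 - v)^-1 * Q a v = \sum_(l < n.+1) dv (T a) l * (v ^+ l.-1 *+ l).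
Proof.
move=> v1.
have v1' : 1 - v != 0 by rewrite subr_eq0 eq_sym.
apply: (mulfI v1'); rewrite mulrA mulfV // mul1r.
rewrite big_ord_recl /= mulr0n mulr0 add0r.
rewrite (eq_bigr (fun j : 'I_n => \sum_(m < n.+1 | (j < m)%N) a m * v ^+ j)); last first.
  move=> j _; rewrite /bump /= add1n -mulr_natr [LHS]mulrCA dvK /=.
  by rewrite add0n mulrC /T mulr_suml.
under eq_bigr => i _ do rewrite big_mkcond.
rewrite exchange_big /= mulr_sumr /Q; apply: eq_bigr => m _.
rewrite -big_mkcond /= -mulr_sumr.
rewrite -(big_ord_widen n (fun j => v ^+ j)); last by rewrite -ltnS.
by rewrite mulrCA geom.
Qed.


Lemma step_x0 (tl : seq (Defs.form R)) b u : 0 < u -> u <= 1 -> b 0%N = 0 ->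
  (forall v, 0 < v < 1 -> iint_from tl v = ((Pp b).[v])%:E) ->
  iint_from (x0 R false :: tl) u = ((Pp (dv b)).[u])%:E.
Proof.
move=> u0 u1 b0 H /=.
transitivity (\int[lebesgue_measure]_(v in `]0%R, u[) (((Pp (dv b))^`()).[v])%:E)%E; last first.
  by rewrite int_poly // Pp0 dv0 subr0.
apply: eq_integral => v; rewrite inE /= in_itv /= => /andP[v0 vu].
rewrite H; last by rewrite v0 /= (lt_le_trans vu u1).
by rewrite -EFinM derivPp -idI ?hornerPp // gt_eqF.
Qed.

Lemma step_x0bar (tl : seq (Defs.form R)) b u : 0 < u -> u < 1 -> b 0%N = 0 ->
  (forall v, 0 < v < 1 -> iint_from tl v = ((Pp b).[v])%:E) ->
  iint_from (x0 R true :: tl) u = (Q (dv b) u)%:E.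
Proof.
move=> u0 u1 b0 H /=.
transitivity (\int[lebesgue_measure]_(v in `]u, 1%R[) (((Pp (dv b))^`()).[v])%:E)%E; last first.
  by rewrite int_poly // Pp1Q.
apply: eq_integral => v; rewrite inE /= in_itv /= => /andP[uv v1].
rewrite H; last by rewrite v1 (lt_trans u0 uv).
by rewrite -EFinM derivPp -idI ?hornerPp // gt_eqF // (lt_trans u0 uv).
Qed.

Lemma step_x1 (tl : seq (Defs.form R)) a u : 0 < u -> u <= 1 ->
  (forall v, 0 < v < 1 -> iint_from tl v = (Q a v)%:E) ->
  iint_from (x1 R false :: tl) u = ((Pp (dv (T a))).[u])%:E.
Proof.
move=> u0 u1 H /=.
transitivity (\int[lebesgue_measure]_(v in `]0%R, u[) (((Pp (dv (T a)))^`()).[v])%:E)%E; last first.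
  by rewrite int_poly // Pp0 dv0 subr0.
apply: eq_integral => v; rewrite inE /= in_itv /= => /andP[v0 vu].
rewrite H; last by rewrite v0 /= (lt_le_trans vu u1).
by rewrite -EFinM derivPp -idII // lt_eqF // (lt_le_trans vu u1).
Qed.

Lemma step_x1bar (tl : seq (Defs.form R)) a u : 0 < u -> u < 1 ->
  (forall v, 0 < v < 1 -> iint_from tl v = (Q a v)%:E) ->
  iint_from (x1 R true :: tl) u = (Q (dv (T a)) u)%:E.
Proof.
move=> u0 u1 H /=.
transitivity (\int[lebesgue_measure]_(v in `]u, 1%R[) (((Pp (dv (T a)))^`()).[v])%:E)%E; last first.
  by rewrite int_poly // Pp1Q.
apply: eq_integral => v; rewrite inE /= in_itv /= => /andP[uv v1].
rewrite H; last by rewrite v1 (lt_trans u0 uv).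
by rewrite -EFinM derivPp -idII // lt_eqF.
Qed.

Definition delta (l : nat) : R := (l == n)%:R.

Lemma step_f u : 0 < u -> u < 1 ->
  iint_from [:: ((fun x : R => n%:R * x ^+ n.-1), true)] u = (Q delta u)%:E.
Proof.
move=> u0 u1 /=.
transitivity (\int[lebesgue_measure]_(v in `]u, 1%R[) (((Pp delta)^`()).[v])%:E)%E; last first.
  by rewrite int_poly // Pp1Q.
apply: eq_integral => v _.
rewrite mule1 derivPp big_ord_recr /= /delta eqxx mul1r big1 ?add0r ?mulr_natl //.
by move=> i _; rewrite (ltn_eqF (ltn_ord i)) mul0r.
Qed.

Definition dvn (j : nat) (b : nat -> R) (l : nat) := b l / (l%:R ^+ j).

Lemma dvn0 b : dvn 0 b = b.
Proof. by apply/funext => l; rewrite /dvn expr0 invr1 mulr1. Qed.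

Lemma dvn_add j k b : dvn j (dvn k b) = dvn (j + k) b.
Proof. by apply/funext => l; rewrite /dvn exprD invfM mulrA mulrAC. Qed.

Lemma dv_dvn b : dv b = dvn 1 b.
Proof. by apply/funext => l; rewrite /dvn /dv expr1. Qed.

Lemma dvn_0 j b : b 0%N = 0 -> dvn j b 0%N = 0.
Proof. by move=> b0; rewrite /dvn b0 mul0r. Qed.

Lemma nseq_x0 j (tl : seq (Defs.form R)) b : b 0%N = 0 ->
  (forall v, 0 < v < 1 -> iint_from tl v = ((Pp b).[v])%:E) ->
  forall v, 0 < v < 1 -> iint_from (nseq j (x0 R false) ++ tl) v = ((Pp (dvn j b)).[v])%:E.
Proof.
move=> b0 H; elim: j => [|j IH] v /andP[v0 v1].
  by rewrite dvn0 /= H // v0 v1.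
rewrite [nseq _ _ ++ _]/= (@step_x0 _ (dvn j b)) ?(ltW v1) ?dvn_0 //.
by rewrite dv_dvn dvn_add.
Qed.

Lemma chi_step s (tl : seq (Defs.form R)) a : (0 < s)%N ->
  (forall v, 0 < v < 1 -> iint_from tl v = (Q a v)%:E) ->
  forall u, 0 < u < 1 -> iint_from (chi R s ++ tl) u = (Q (dvn s (T a)) u)%:E.
Proof.
move=> s0 H u /andP[u0 u1]; rewrite /chi.
case: eqP => [->|s1].
  by rewrite -dv_dvn -(@step_x1bar tl).
have -> : (x0 R true :: nseq (s-2) (x0 R false) ++ [:: x1 R false]) ++ tl =
  x0 R true :: (nseq (s-2) (x0 R false) ++ (x1 R false :: tl)) by rewrite /= -catA.
rewrite (@step_x0bar _ (dvn (s-2) (dv (T a)))) //.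
- rewrite !dv_dvn !dvn_add.
  by have -> : (1 + (s - 2) + 1 = s)%N by lia.
- by rewrite dvn_0 // dv0.
- apply: nseq_x0; first exact: dv0.
  by move=> v /andP[v0 v1]; rewrite (@step_x1 tl a) // ltW.
Qed.

Fixpoint Fc (s : seq nat) : nat -> R :=
  match s with
  | [::] => delta
  | s1 :: r => dvn s1 (T (Fc r))
  end.

Lemma rest_step (rest : seq nat) : all (fun si => 0 < si)%N rest ->
  forall u, 0 < u < 1 ->
  iint_from (flatten (map (@chi R) rest) ++ [:: ((fun x : R => n%:R * x ^+ n.-1), true)]) u
    = (Q (Fc rest) u)%:E.
Proof.
elim: rest => [|s r IH] /= => [_ u /andP[u0 u1]|/andP[s0 ar] u uu].
  exact: step_f.
by rewrite -catA (@chi_step _ _ (Fc r)) // => v vv; rewrite IH.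
Qed.

Lemma D_eq (s : seq nat) : (0 < size s)%N -> all (fun si => 0 < si)%N s ->
  D s (fun x : R => n%:R * x ^+ n.-1) = (\sum_(l < n.+1) Fc s l)%:E.
Proof.
case: s => // s1 rest _ /= /andP[s10 ar].
rewrite /D /iint /Dword.
have E : (Pp (Fc (s1 :: rest))).[1] = \sum_(l < n.+1) Fc (s1 :: rest) l.
  by rewrite hornerPp; apply: eq_bigr => l _; rewrite expr1n mulr1.
rewrite -E /=.
case: s1 s10 {E} => // -[|j] _ /=.
  rewrite -dv_dvn -(@step_x1 (flatten (map (@chi R) rest) ++ [:: ((fun x : R => n%:R * x ^+ n.-1), true)]) (Fc rest)) ?ltr01 //.
  by move=> v vv; rewrite rest_step.
have -> : dvn j.+2 (T (Fc rest)) = dv (dvn j (dv (T (Fc rest)))).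
  by rewrite !dv_dvn !dvn_add addn1 add1n.
rewrite -(@step_x0 (nseq j (x0 R false) ++ x1 R false :: flatten (map (@chi R) rest) ++ [:: ((fun x : R => n%:R * x ^+ n.-1), true)]) (dvn j (dv (T (Fc rest))))) ?ltr01 ?dvn_0 ?dv0 //.
move=> v vv; rewrite (@nseq_x0 _ _ (dv (T (Fc rest)))) //; first exact: dv0.
move=> w /andP[w0 w1]; rewrite (@step_x1 _ (Fc rest)) ?(ltW w1) //.
by move=> z zz; rewrite rest_step.
Qed.
Definition mono k (v : {ffun 'I_k -> 'I_n}) :=
  [forall i : 'I_k, forall j : 'I_k, (i <= j)%N ==> (v i <= v j)%N].

Definition G (s : seq nat) (L : nat) : R :=
  \sum_(v : {ffun 'I_(size s) -> 'I_n} | mono v && [forall i, (L <= v i)%N])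
    \prod_(i < size s) (((v i).+1%:R : R) ^+ nth 0%N s i)^-1.

Definition consf k (x : 'I_n) (w : {ffun 'I_k -> 'I_n}) : {ffun 'I_k.+1 -> 'I_n} :=
  [ffun i => if unlift ord0 i is Some j then w j else x].
Definition tailf k (v : {ffun 'I_k.+1 -> 'I_n}) : {ffun 'I_k -> 'I_n} :=
  [ffun j => v (lift ord0 j)].

Lemma consf0 k x (w : {ffun 'I_k -> 'I_n}) : consf x w ord0 = x.
Proof. by rewrite ffunE unlift_none. Qed.
Lemma consfS k x (w : {ffun 'I_k -> 'I_n}) j : consf x w (lift ord0 j) = w j.
Proof. by rewrite ffunE liftK. Qed.

Lemma tailfK k (v : {ffun 'I_k.+1 -> 'I_n}) : consf (v ord0) (tailf v) = v.
Proof.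
apply/ffunP => i; rewrite ffunE; case: (unliftP ord0 i) => [j|] -> //.
by rewrite ffunE.
Qed.

Lemma consfK k x (w : {ffun 'I_k -> 'I_n}) : tailf (consf x w) = w.
Proof. by apply/ffunP => j; rewrite ffunE consfS. Qed.

Lemma mono_consf k x (w : {ffun 'I_k -> 'I_n}) :
  mono (consf x w) = mono w && [forall i, (x <= w i)%N].
Proof.
apply/idP/idP.
- move=> /forallP m; apply/andP; split.
    apply/forallP => i; apply/forallP => j; apply/implyP => ij.
    have := m (lift ord0 i) => /forallP /(_ (lift ord0 j)) /implyP.
    by rewrite !consfS; apply; rewrite /= /bump /=; lia.
  apply/forallP => i.
  have := m ord0 => /forallP /(_ (lift ord0 i)) /implyP.
  by rewrite consf0 consfS; apply.
- move=> /andP[/forallP m /forallP xw].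
  apply/forallP => i; apply/forallP => j; apply/implyP.
  case: (unliftP ord0 i) => [i'|] ->; case: (unliftP ord0 j) => [j'|] ->;
    rewrite ?consfS ?consf0 //.
  move=> ij; have := m i' => /forallP /(_ j') /implyP; apply.
  by move: ij; rewrite /= /bump /=; lia.
Qed.

Lemma G_cons s1 r L :
  G (s1 :: r) L = \sum_(x < n | (L <= x)%N) ((x.+1%:R : R) ^+ s1)^-1 * G r x.
Proof.
rewrite /G /=.
rewrite (partition_big (fun v : {ffun 'I_(size r).+1 -> 'I_n} => v ord0) (fun x : 'I_n => (L <= x)%N)) /=; last first.
  by move=> v /andP[_ /forallP /(_ ord0)].
apply: eq_bigr => x Lx.
rewrite (reindex_onto (fun w : {ffun 'I_(size r) -> 'I_n} => consf x w) (@tailf _)) /=; last first.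
  by move=> v /andP[_ /eqP <-]; rewrite tailfK.
rewrite mulr_sumr; apply: eq_big => w.
- rewrite consfK eqxx andbT consf0 eqxx andbT mono_consf.
  case: (mono w) => //=.
  apply/idP/idP.
  + by move=> /andP[xw _].
  + move=> xw; rewrite xw /=; apply/forallP => i.
    case: (unliftP ord0 i) => [j|] ->; rewrite ?consf0 ?consfS //.
    by move/forallP: xw => /(_ j) xj; apply: leq_trans xj.
- move=> _; rewrite big_ord_recl consf0 /=; congr (_ * _).
  by apply: eq_bigr => i _; rewrite consfS.
Qed.


Lemma FcG s L : (L < n)%N -> \sum_(m < n.+1 | (L < m)%N) Fc s m = G s L.
Proof.
elim: s L => [|s1 r IH] L Ln.
  rewrite big_mkcond big_ord_recr /= Ln /delta eqxx big1 ?add0r; last first.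
    by move=> i _; rewrite (ltn_eqF (ltn_ord i)); case: ifP.
  rewrite /G /= (eq_bigl xpredT); last first.
    move=> v; apply/andP; split; apply/forallP => -[] //.
  rewrite (eq_bigr (fun _ => 1)); last by move=> v _; rewrite big_ord0.
  by rewrite sumr_const card_ffun (card_ord 0) expn0.
rewrite (G_cons s1 r L) /= big_mkcond big_ord_recl /= add0r -big_mkcond /=.
apply: eq_big => x; first by [].
move=> _; rewrite /dvn mulrC; congr (_ * _).
exact: IH.
Qed.

Lemma sum_Fc s : (0 < size s)%N -> all (fun si => 0 < si)%N s -> (0 < n)%N ->
  \sum_(l < n.+1) Fc s l = mzv_trunc R s n.
Proof.
case: s => // s1 r _ /= /andP[s10 _] n0.
rewrite (bigID (fun l : 'I_n.+1 => (0 < l)%N)) /= [X in _ + X]big1 ?addr0; last first.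
  move=> l; rewrite lt0n negbK => /eqP l0.
  case: (s1) s10 => // s1' _.
  by rewrite /= /dvn l0 mulr0n exprS mul0r invr0 mulr0.
have := FcG (s1 :: r) n0; rewrite /= => ->.
rewrite /mzv_trunc /G; apply: eq_bigl => v.
have -> : [forall i, (0 <= v i)%N] by apply/forallP.
by rewrite andbT.
Qed.
End S.

Unset Implicit Arguments.
Local Open Scope ring_scope.

Theorem lemma4p3 (R : realType) (s : seq nat) (n : nat) :
  (0 < size s)%N -> all (fun si => 0 < si)%N s -> (0 < n)%N ->
  D s (fun x : R => n%:R * x ^+ n.-1) = (mzv_trunc R s n)%:E.
Proof.
move=> hs ha hn.
by rewrite (@D_eq R n s hs ha) (@sum_Fc R n s hs ha hn).
Qed.
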